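(* Let $n\ge 2$ and let $v_1,\ldots,v_n$ be positive integers all less than or equal to $1.2n$. Then either $\mathrm{ML}(v_1,\ldots,v_n)=\frac{1}{n+1}$, or $\mathrm{ML}(v_1,\ldots,v_n)=\frac{2}{2n+1}$, or $\mathrm{ML}(v_1,\ldots,v_n)\ge\frac1n$.
   Context: For a real number $x$, $\Vert x\Vert$ denotes the distance from $x$ to the nearest integer. For positive integers $v_1,\ldots,v_n$, the maximum loneliness is $\mathrm{ML}(v_1,\ldots,v_n)=\max_{t\in\mathbb{R}}\min_{1\le i\le n}\Vert t v_i\Vert$. *)

(* Defs.v *)
From Stdlib Require Import Reals Lra Lia ClassicalEpsilon.
Open Scope R_scope.

Definition dist_int (x : R) : R := Rabs (x - IZR (Int_part (x + /2))).

(* min_{0 <= i < n} ||t * v i||  (for n >= 1); indices shifted to 0..n-1. *)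
Fixpoint min_loneliness (t : R) (v : nat -> nat) (n : nat) : R :=
  match n with
  | O => 1
  | S O => dist_int (t * INR (v O))
  | S m => Rmin (min_loneliness t v m) (dist_int (t * INR (v m)))
  end.

Definition is_max_loneliness (v : nat -> nat) (n : nat) (m : R) : Prop :=
  (exists t : R, min_loneliness t v n = m) /\
  (forall t : R, min_loneliness t v n <= m).

Definition ML (v : nat -> nat) (n : nat) : R :=
  epsilon (inhabits 0) (fun m => is_max_loneliness v n m).

(* Main.v *)
Require Import Defs.
From Stdlib Require Import Reals Lra Lia List ClassicalEpsilon Classical ZArith Arith.
Open Scope nat_scope.

Lemma fail_facts (n j u1 u2 u3 : nat) : 2 <= n -> 1 <= j <= n ->
  1 <= u1 -> 5 * u1 <= 6 * n -> u1 <> j -> u1 mod j = 0 ->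
  1 <= u2 -> 5 * u2 <= 6 * n -> u2 <> j -> ~ (u2 mod j = 0 \/ u2 mod j + 2 <= j \/ u2 + 2 * j <= 2 * n) ->
  1 <= u3 -> 5 * u3 <= 6 * n -> u3 mod j = 1 -> 2 * n < u3 + 2 * j ->
  n < 2 * j /\ u1 = 2 * j /\ u3 = 2 * j + 1.
Proof.
  intros Hn Hj H11 H12 H13 H14 H21 H22 H23 H24 H31 H32 H33 H34.
  pose proof (Nat.div_mod u1 j ltac:(lia)) as E1.
  pose proof (Nat.div_mod u2 j ltac:(lia)) as E2.
  pose proof (Nat.div_mod u3 j ltac:(lia)) as E3.
  pose proof (Nat.mod_upper_bound u2 j ltac:(lia)) as M2.
  set (q1 := u1 / j) in *. set (q2 := u2 / j) in *. set (q3 := u3 / j) in *.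
  set (r2 := u2 mod j) in *.
  assert (Hr2 : r2 = j - 1 /\ r2 <> 0) by lia.
  assert (Hj5 : 2 * n < 5 * j) by lia.
  assert (Hq1 : q1 = 2).
  { destruct q1 as [|[|[|q]]]; nia. }
  assert (Hj3 : 5 * j <= 3 * n) by nia.
  assert (Hq3 : q3 = 2).
  { destruct q3 as [|[|[|q]]]; nia. }
  assert (Hq2 : q2 = 1 \/ q2 = 2).
  { destruct q2 as [|[|[|q]]]; nia. }
  destruct Hq2 as [Hq2|Hq2]; nia.
Qed.


Section Count.
Variable n : nat.
Variable v : nat -> nat.
Definition inS (k : nat) : Prop := exists i, i < n /\ v i = k.
Definition inSb (k : nat) : bool := existsb (fun i => Nat.eqb (v i) k) (seq 0 n).

Lemma inSb_spec k : inSb k = true <-> inS k.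
Proof.
  unfold inSb, inS. rewrite existsb_exists. split.
  - intros [i [Hi He]]. apply in_seq in Hi. apply Nat.eqb_eq in He. exists i. split; [lia|auto].
  - intros [i [Hi He]]. exists i. split. apply in_seq; lia. apply Nat.eqb_eq; auto.
Qed.

Lemma inS_map k : inS k -> In k (map v (seq 0 n)).
Proof. intros [i [Hi He]]. apply in_map_iff. exists i. split; auto. apply in_seq; lia. Qed.

Lemma count_contra (j0 : nat) : 1 <= j0 <= n -> ~ inS j0 ->
  (forall j, 1 <= j <= n -> ~ inS j -> n < 2 * j /\ inS (2 * j) /\ inS (2 * j + 1)) -> False.
Proof.
  intros Hj0 Hm0 Hf.
  set (Pres := filter inSb (seq 1 n)).
  set (J := filter (fun k => negb (inSb k)) (seq 1 n)).
  assert (HJ : forall j, In j J -> 1 <= j <= n /\ ~ inS j).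
  { intros j Hj. unfold J in Hj. apply filter_In in Hj. destruct Hj as [H1 H2].
    apply in_seq in H1. split. lia. rewrite <- inSb_spec. destruct (inSb j); simpl in *; congruence. }
  assert (HP : forall k, In k Pres -> 1 <= k <= n /\ inS k).
  { intros k Hk. unfold Pres in Hk. apply filter_In in Hk. destruct Hk as [H1 H2].
    apply in_seq in H1. split. lia. apply inSb_spec; auto. }
  destruct (Hf j0 Hj0 Hm0) as [A0 [B0 C0]].
  set (K := Pres ++ (2 * j0 :: map (fun j => 2 * j + 1) J)).
  assert (HND : NoDup K).
  { apply NoDup_app.
    - apply NoDup_filter, seq_NoDup.
    - constructor.
      + intro Hin. apply in_map_iff in Hin. destruct Hin as [j [Hj _]]. lia.
      + apply NoDup_map_NoDup_ForallPairs. intros a b _ _ Hab. lia.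
        apply NoDup_filter, seq_NoDup.
    - intros a Ha Hb. apply HP in Ha. destruct Hb as [Hb|Hb]. lia.
      apply in_map_iff in Hb. destruct Hb as [j [Hj Hj']]. apply HJ in Hj'.
      destruct Hj' as [Hj1 Hj2]. destruct (Hf j Hj1 Hj2). lia. }
  assert (HI : incl K (map v (seq 0 n))).
  { intros a Ha. apply inS_map. apply in_app_or in Ha. destruct Ha as [Ha|[Ha|Ha]].
    - apply HP in Ha. tauto.
    - subst a. exact B0.
    - apply in_map_iff in Ha. destruct Ha as [j [<- Hj]]. apply HJ in Hj.
      destruct Hj as [Hj1 Hj2]. apply (Hf j Hj1 Hj2). }
  pose proof (NoDup_incl_length HND HI) as HL.
  unfold K in HL. rewrite length_app, length_map in HL. simpl in HL. rewrite length_map, length_seq in HL.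
  pose proof (filter_length inSb (seq 1 n)) as HF. rewrite length_seq in HF.
  fold Pres J in HF. lia.
Qed.

Lemma covered_bound : (forall k, 1 <= k <= n -> inS k) -> forall i, i < n -> v i <= n.
Proof.
  intros Hc i Hi. destruct (Nat.le_gt_cases (v i) n) as [H|H]; auto. exfalso.
  assert (HND : NoDup (v i :: seq 1 n)).
  { constructor. intro Hin. apply in_seq in Hin. lia. apply seq_NoDup. }
  assert (HI : incl (v i :: seq 1 n) (map v (seq 0 n))).
  { intros a [Ha|Ha]. subst a. apply inS_map. exists i; auto.
    apply in_seq in Ha. apply inS_map, Hc. lia. }
  pose proof (NoDup_incl_length HND HI) as HL. simpl in HL. rewrite length_map, !length_seq in HL. lia.
Qed.
End Count.
Open Scope R_scope.

Lemma IZR_lt_succ (a b : Z) : IZR a < IZR b + 1 -> (a <= b)%Z.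
Proof. intro H. rewrite <- plus_IZR in H. apply lt_IZR in H. lia. Qed.

Lemma dist_up (x : R) (m : Z) : dist_int x <= Rabs (x - IZR m).
Proof.
  unfold dist_int. set (z := Int_part (x + /2)).
  destruct (base_Int_part (x + /2)) as [H1 H2]. fold z in H1, H2.
  destruct (Z.eq_dec m z) as [->|Hne]; [lra|].
  assert (Hd : (m <= z - 1)%Z \/ (z + 1 <= m)%Z) by lia.
  destruct Hd as [Hd|Hd]; apply IZR_le in Hd; rewrite ?minus_IZR, ?plus_IZR in Hd;
  unfold Rabs; repeat destruct Rcase_abs; lra.
Qed.

Lemma dist_low (x : R) (k : Z) (a : R) :
  IZR k + a <= x <= IZR k + 1 - a -> a <= dist_int x.
Proof.
  intros [H1 H2]. unfold dist_int. set (z := Int_part (x + /2)).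
  destruct (Z.le_gt_cases z k) as [Hz|Hz].
  - apply IZR_le in Hz. unfold Rabs; destruct Rcase_abs; lra.
  - assert (Hz' : (k + 1 <= z)%Z) by lia. apply IZR_le in Hz'. rewrite plus_IZR in Hz'.
    unfold Rabs; destruct Rcase_abs; lra.
Qed.

Lemma dist_eq_round (x : R) : exists z : Z, dist_int x = Rabs (x - IZR z).
Proof. exists (Int_part (x + /2)). reflexivity. Qed.

Lemma dist_period (x : R) (m : Z) : dist_int (x + IZR m) = dist_int x.
Proof.
  apply Rle_antisym.
  - destruct (dist_eq_round x) as [z Hz]. rewrite Hz.
    replace (Rabs (x - IZR z)) with (Rabs (x + IZR m - IZR (z + m))).
    apply dist_up. rewrite plus_IZR. f_equal. ring.
  - destruct (dist_eq_round (x + IZR m)) as [z Hz]. rewrite Hz.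
    replace (Rabs (x + IZR m - IZR z)) with (Rabs (x - IZR (z - m))).
    apply dist_up. rewrite minus_IZR. f_equal. ring.
Qed.

Lemma dist_lip (x y : R) : dist_int x <= dist_int y + Rabs (x - y).
Proof.
  destruct (dist_eq_round y) as [z Hz]. rewrite Hz.
  eapply Rle_trans. apply (dist_up x z).
  replace (x - IZR z) with ((y - IZR z) + (x - y)) by ring. apply Rabs_triang.
Qed.

Section ML.
Variable v : nat -> nat.

Lemma L1 (m : nat) (t : R) (i : nat) : (i <= m)%nat ->
  min_loneliness t v (S m) <= dist_int (t * INR (v i)).
Proof.
  revert i. induction m as [|m IH]; intros i Hi.
  - assert (i = 0%nat) by lia. subst. simpl. lra.
  - change (min_loneliness t v (S (S m))) with
      (Rmin (min_loneliness t v (S m)) (dist_int (t * INR (v (S m))))).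
    destruct (Nat.eq_dec i (S m)) as [->|Hne].
    + apply Rmin_r.
    + eapply Rle_trans. apply Rmin_l. apply IH. lia.
Qed.

Lemma L2 (m : nat) (t a : R) : (forall i, (i <= m)%nat -> a <= dist_int (t * INR (v i))) ->
  a <= min_loneliness t v (S m).
Proof.
  induction m as [|m IH]; intros H.
  - simpl. apply H. lia.
  - change (min_loneliness t v (S (S m))) with
      (Rmin (min_loneliness t v (S m)) (dist_int (t * INR (v (S m))))).
    apply Rmin_glb. apply IH. intros; apply H; lia. apply H; lia.
Qed.

Lemma L3 (m : nat) (t : R) : exists i, (i <= m)%nat /\
  min_loneliness t v (S m) = dist_int (t * INR (v i)).
Proof.
  induction m as [|m IH].
  - exists 0%nat. split. lia. reflexivity.
  - change (min_loneliness t v (S (S m))) with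
      (Rmin (min_loneliness t v (S m)) (dist_int (t * INR (v (S m))))).
    unfold Rmin. destruct Rle_dec.
    + destruct IH as [i [Hi He]]. exists i. split. lia. exact He.
    + exists (S m). split. lia. reflexivity.
Qed.

Lemma ml_period (m : nat) (t : R) (z : Z) :
  min_loneliness (t + IZR z) v (S m) = min_loneliness t v (S m).
Proof.
  assert (Hd : forall i, dist_int ((t + IZR z) * INR (v i)) = dist_int (t * INR (v i))).
  { intro i. rewrite INR_IZR_INZ.
    replace ((t + IZR z) * IZR (Z.of_nat (v i))) with
      (t * IZR (Z.of_nat (v i)) + IZR (z * Z.of_nat (v i))) by (rewrite mult_IZR; ring).
    apply dist_period. }
  apply Rle_antisym; apply L2; intros i Hi.
  - rewrite <- Hd. apply L1; auto.
  - rewrite Hd. apply L1; auto.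
Qed.

Lemma ml_lip (m : nat) (C : R) (t s : R) :
  (forall i, (i <= m)%nat -> INR (v i) <= C) ->
  min_loneliness t v (S m) <= min_loneliness s v (S m) + C * Rabs (t - s).
Proof.
  intros HC. destruct (L3 m s) as [i [Hi He]]. rewrite He.
  eapply Rle_trans. apply (L1 m t i Hi).
  eapply Rle_trans. apply dist_lip.
  apply Rplus_le_compat_l.
  replace (t * INR (v i) - s * INR (v i)) with ((t - s) * INR (v i)) by ring.
  rewrite Rabs_mult, (Rabs_right (INR (v i))) by (apply Rle_ge, pos_INR).
  rewrite Rmult_comm. apply Rmult_le_compat_r. apply Rabs_pos. auto.
Qed.

Lemma ml_cont (m : nat) (C : R) (x : R) :
  (forall i, (i <= m)%nat -> INR (v i) <= C) ->
  continuity_pt (fun t => min_loneliness t v (S m)) x.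
Proof.
  intros HC. assert (HC0 : 0 <= C).
  { eapply Rle_trans. apply (pos_INR (v 0)). apply HC. lia. }
  intros eps Heps. exists (eps / (C + 1)). split.
  - apply Rdiv_lt_0_compat; lra.
  - intros y [_ Hy]. change (R_dist y x < eps/(C+1)) in Hy.
    change (R_dist (min_loneliness y v (S m)) (min_loneliness x v (S m)) < eps).
    unfold R_dist in *.
    pose proof (ml_lip m C y x HC) as A. pose proof (ml_lip m C x y HC) as B.
    rewrite Rabs_minus_sym in B.
    assert (Hk : C * Rabs (y - x) < eps).
    { apply Rle_lt_trans with ((C+1) * Rabs (y - x)).
      apply Rmult_le_compat_r. apply Rabs_pos. lra.
      apply Rmult_lt_reg_l with (/ (C+1)). apply Rinv_0_lt_compat; lra.
      rewrite <- Rmult_assoc, Rinv_l by lra. 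
      replace (/ (C + 1) * eps) with (eps / (C+1)) by (unfold Rdiv; ring). lra. }
    unfold Rabs at 1; destruct Rcase_abs; lra.
Qed.

Lemma ml_max (m : nat) (C : R) :
  (forall i, (i <= m)%nat -> INR (v i) <= C) ->
  exists M, is_max_loneliness v (S m) M.
Proof.
  intros HC.
  destruct (continuity_ab_maj (fun t => min_loneliness t v (S m)) 0 1) as [Mx [H1 H2]].
  lra. intros c _. apply (ml_cont m C c HC).
  exists (min_loneliness Mx v (S m)). split. eauto.
  intro t. destruct (base_Int_part t) as [B1 B2].
  assert (E : min_loneliness t v (S m) = min_loneliness (t - IZR (Int_part t)) v (S m)).
  { rewrite <- (ml_period m (t - IZR (Int_part t)) (Int_part t)). f_equal. ring. }
  rewrite E. apply H1. lra.
Qed.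

End ML.

Lemma G (y : R) (k X D n : nat) : (0 < D)%nat -> (1 <= n)%nat ->
  y = INR k + INR X / INR D -> (D <= X * n)%nat -> (X * n + D <= D * n)%nat ->
  1 / INR n <= dist_int y.
Proof.
  intros HD Hn Hy H1 H2.
  apply le_INR in H1. apply le_INR in H2. rewrite ?plus_INR, ?mult_INR in H1, H2.
  apply lt_INR in HD. apply le_INR in Hn. simpl in HD, Hn.
  set (d := INR D) in *. set (x := INR X) in *. set (nn := INR n) in *.
  set (u := x / d) in *.
  assert (Hx : x = u * d) by (unfold u; field; lra).
  rewrite plus_INR, mult_INR in H2. fold x d nn in H2. rewrite Hx in H1, H2.
  assert (A1 : 1 <= u * nn).
  { apply Rmult_le_reg_l with d. lra. nra. }
  assert (A2 : u * nn + 1 <= nn).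
  { apply Rmult_le_reg_l with d. lra. nra. }
  assert (B1 : 1 / nn <= u).
  { apply Rmult_le_reg_r with nn. lra. unfold Rdiv. rewrite Rmult_assoc, Rinv_l by lra. lra. }
  assert (B2 : u <= 1 - 1 / nn).
  { apply Rmult_le_reg_r with nn. lra. unfold Rdiv. rewrite Rmult_minus_distr_r, Rmult_assoc, Rinv_l by lra. lra. }
  apply (dist_low y (Z.of_nat k)). rewrite <- INR_IZR_INZ. rewrite Hy. lra.
Qed.

Lemma INR2 : INR 2 = 2.
Proof. simpl. ring. Qed.

Lemma divmod_R (v j : nat) : (0 < j)%nat -> INR v = INR j * INR (v / j) + INR (v mod j).
Proof. intro. rewrite <- mult_INR, <- plus_INR. f_equal. apply Nat.div_mod. lia. Qed.

Lemma A1 (n j v : nat) : (1 <= j <= n)%nat -> (v mod j <> 0)%nat ->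
  1 / INR n <= dist_int (1 / INR j * INR v).
Proof.
  intros Hj Hr. pose proof (Nat.mod_upper_bound v j ltac:(lia)) as Hu.
  pose proof (divmod_R v j ltac:(lia)) as E.
  set (q := (v / j)%nat) in *. set (r := (v mod j)%nat) in *.
  apply (G _ q (n * r) (j * n) n); try nia.
  rewrite E, !mult_INR. assert (0 < INR j) by (apply lt_0_INR; lia).
  assert (0 < INR n) by (apply lt_0_INR; lia). field. lra.
Qed.

Lemma B1 (n j v : nat) : (1 <= j <= n)%nat -> (2 <= n)%nat -> (1 <= v)%nat -> (5 * v <= 6 * n)%nat ->
  v <> j -> (v mod j = 0 \/ v mod j + 2 <= j \/ v + 2 * j <= 2 * n)%nat ->
  1 / INR n <= dist_int ((2 * INR n + 1) / (2 * INR j * INR n) * INR v).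
Proof.
  intros Hj Hn Hv H5 Hne Hc. pose proof (Nat.mod_upper_bound v j ltac:(lia)) as Hu.
  pose proof (Nat.div_mod v j ltac:(lia)) as En.
  pose proof (divmod_R v j ltac:(lia)) as E.
  set (q := (v / j)%nat) in *. set (r := (v mod j)%nat) in *.
  assert (0 < INR j) by (apply lt_0_INR; lia).
  assert (0 < INR n) by (apply lt_0_INR; lia).
  destruct (Nat.eq_dec r 0) as [Hr|Hr].
  - assert (Hq2 : (2 <= q)%nat).
    { destruct q as [|[|q']]; [lia|lia|lia]. }
    assert (Hq : (5 * q <= 6 * n)%nat) by nia.
    apply (G _ q q (2 * n) n); try nia.
    rewrite E, Hr, !mult_INR, INR2. change (INR 0) with 0. field. lra.
  - apply (G _ q (2 * n * r + v) (2 * j * n) n); try nia.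
    rewrite E at 1. rewrite ?plus_INR, !mult_INR, INR2, E. field. lra.
Qed.

Lemma C1 (n j v : nat) : (1 <= j <= n)%nat -> (2 <= n)%nat -> (1 <= v)%nat -> (5 * v <= 6 * n)%nat ->
  v <> j -> (v mod j <> 1 \/ v + 2 * j <= 2 * n)%nat ->
  1 / INR n <= dist_int ((2 * INR n - 1) / (2 * INR j * INR n) * INR v).
Proof.
  intros Hj Hn Hv H5 Hne Hc. pose proof (Nat.mod_upper_bound v j ltac:(lia)) as Hu.
  pose proof (Nat.div_mod v j ltac:(lia)) as En.
  pose proof (divmod_R v j ltac:(lia)) as E.
  set (q := (v / j)%nat) in *. set (r := (v mod j)%nat) in *.
  assert (0 < INR j) by (apply lt_0_INR; lia).
  assert (0 < INR n) by (apply lt_0_INR; lia).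
  destruct (Nat.eq_dec r 0) as [Hr|Hr].
  - assert (Hq2 : (2 <= q)%nat).
    { destruct q as [|[|q']]; [lia|lia|lia]. }
    assert (Hq : (5 * q <= 6 * n)%nat) by nia.
    apply (G _ (q - 1) (2 * n - q) (2 * n) n); try nia.
    rewrite E, Hr, !minus_INR, !mult_INR, INR2 by lia. simpl INR. field. lra.
  - apply (G _ q (2 * n * r - v) (2 * j * n) n); try nia.
    rewrite minus_INR by nia.
    rewrite E at 1. rewrite ?plus_INR, !mult_INR, INR2, E. field. lra.
Qed.

Lemma Int_part_bounds (r : R) : IZR (Int_part r) <= r < IZR (Int_part r) + 1.
Proof. destruct (base_Int_part r). lra. Qed.

Lemma Int_part_unique (r : R) (z : Z) : IZR z <= r < IZR z + 1 -> Int_part r = z.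
Proof.
  intros [H1 H2]. destruct (Int_part_bounds r) as [B1 B2].
  assert (A : (Int_part r < z + 1)%Z). { apply lt_IZR. rewrite plus_IZR. lra. }
  assert (B : (z < Int_part r + 1)%Z). { apply lt_IZR. rewrite plus_IZR. lra. }
  lia.
Qed.

Lemma dirichlet (n : nat) (t : R) : (1 <= n)%nat ->
  exists k, (1 <= k <= n)%nat /\ dist_int (t * INR k) <= 1 / (INR n + 1).
Proof.
  intros Hn. apply NNPP. intro Hc.
  assert (H : forall k, (1 <= k <= n)%nat -> 1 / (INR n + 1) < dist_int (t * INR k)).
  { intros k Hk. apply Rnot_le_lt. intro. apply Hc. eauto. }
  clear Hc.
  assert (HN : 0 < INR n + 1) by (pose proof (pos_INR n); lra).
  set (N := INR n + 1) in *.
  set (I k := Int_part (t * INR k)).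
  set (x k := t * INR k - IZR (I k)).
  assert (Hx : forall k, 0 <= x k < 1).
  { intro k. unfold x, I. destruct (Int_part_bounds (t * INR k)). lra. }
  set (z k := Int_part (N * x k)).
  assert (Hz : forall k, IZR (z k) <= N * x k < IZR (z k) + 1).
  { intro k. apply Int_part_bounds. }
  assert (Hz0 : forall k, (0 <= z k)%Z).
  { intro k. destruct (Hz k) as [A B]. specialize (Hx k).
    assert (0 <= N * x k) by (apply Rmult_le_pos; lra).
    assert (C : IZR 0 < IZR (z k + 1)) by (rewrite plus_IZR; simpl; lra).
    apply lt_IZR in C. lia. }
  assert (Hzn : forall k, (k <= n)%nat -> (z k < Z.of_nat n)%Z).
  { intros k Hk. destruct (Z.lt_ge_cases (z k) (Z.of_nat n)) as [Hl|Hl]; [exact Hl|exfalso].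
    apply IZR_le in Hl. rewrite <- INR_IZR_INZ in Hl. destruct (Hz k) as [Hz1 Hz2].
    destruct (Nat.eq_dec k 0) as [->|Hk0].
    - unfold x, I in Hz1. rewrite Rmult_0_r in Hz1.
      rewrite (Int_part_unique 0 0) in Hz1 by (simpl; lra). simpl in Hz1.
      assert (1 <= INR n) by (apply (le_INR 1); lia). lra.
    - specialize (H k ltac:(lia)).
      assert (D : dist_int (t * INR k) <= Rabs (t * INR k - IZR (I k + 1))) by apply dist_up.
      rewrite plus_IZR in D. 
      assert (E : x k >= INR n / N).
      { apply Rle_ge. apply Rmult_le_reg_l with N. lra. unfold Rdiv. 
        rewrite <- Rmult_assoc, (Rmult_comm N), Rmult_assoc, Rinv_r by lra. lra. }
      assert (F : 1 - INR n / N = 1 / N) by (unfold N in *; field; lra).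
      pose proof (Hx k) as Hxk. unfold x in E, Hxk. rewrite Rabs_left1 in D by lra. lra. }
  set (b k := Z.to_nat (z k)).
  assert (Hinj : forall i j, (i < j <= n)%nat -> b i <> b j).
  { intros i j Hij Hb. unfold b in Hb. apply Z2Nat.inj in Hb; try apply Hz0.
    destruct (Hz i) as [A1 A2]. destruct (Hz j) as [B1 B2]. rewrite Hb in A1, A2.
    assert (Hd : Rabs (x j - x i) < 1 / N).
    { apply Rmult_lt_reg_l with N. lra. unfold Rdiv. rewrite Rmult_1_l, Rinv_r by lra.
      rewrite <- (Rabs_right N) at 1 by lra. rewrite <- Rabs_mult.
      unfold Rabs; destruct Rcase_abs; lra. }
    specialize (H (j - i)%nat ltac:(lia)).
    assert (D : dist_int (t * INR (j - i)) <= Rabs (t * INR (j - i) - IZR (I j - I i))) by apply dist_up.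
    rewrite minus_IZR, minus_INR in D by lia.
    replace (t * (INR j - INR i) - (IZR (I j) - IZR (I i))) with (x j - x i) in D
      by (unfold x; ring).
    rewrite minus_INR in H by lia. lra. }
  assert (HL : NoDup (map b (seq 0 (S n)))).
  { apply NoDup_map_NoDup_ForallPairs; [|apply seq_NoDup].
    intros i j Hi Hj Hb. apply in_seq in Hi. apply in_seq in Hj.
    destruct (Nat.lt_trichotomy i j) as [Hl|[He|Hl]]; auto.
    - exfalso. apply (Hinj i j); auto. lia.
    - exfalso. apply (Hinj j i); auto. lia. }
  assert (Hincl : incl (map b (seq 0 (S n))) (seq 0 n)).
  { intros y Hy. apply in_map_iff in Hy. destruct Hy as [k [<- Hk]]. apply in_seq in Hk.
    apply in_seq. unfold b. specialize (Hzn k ltac:(lia)). specialize (Hz0 k). lia. }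
  pose proof (NoDup_incl_length HL Hincl) as Hlen.
  rewrite length_map, !length_seq in Hlen. lia.
Qed.

Theorem proposition11p2 (n : nat) (v : nat -> nat) :
  (2 <= n)%nat ->
  (forall i : nat, (i < n)%nat -> (0 < v i)%nat /\ (5 * v i <= 6 * n)%nat) ->
  ML v n = 1 / (INR n + 1) \/
  ML v n = 2 / (2 * INR n + 1) \/
  ML v n >= 1 / INR n.
Proof.
  intros Hn Hv. destruct n as [|m]; [lia|].
  assert (HC : forall i, (i <= m)%nat -> INR (v i) <= INR (2 * S m)).
  { intros i Hi; apply le_INR; specialize (Hv i ltac:(lia)); lia. }
  destruct (ml_max v m _ HC) as [M HM].
  pose proof (epsilon_spec (inhabits 0) (fun m0 => is_max_loneliness v (S m) m0)
    (ex_intro _ M HM)) as HE.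
  change (is_max_loneliness v (S m) (ML v (S m))) in HE.
  destruct HE as [[t0 Ht0] Hmax].
  destruct (classic (forall k, (1 <= k <= S m)%nat -> inS (S m) v k)) as [Hcov|Hncov].
  - left. apply Rle_antisym.
    + rewrite <- Ht0. destruct (dirichlet (S m) t0 ltac:(lia)) as [k [Hk Hd]].
      destruct (Hcov k Hk) as [i [Hi Hvi]]. eapply Rle_trans. apply (L1 v m t0 i ltac:(lia)).
      rewrite Hvi. exact Hd.
    + replace (INR (S m) + 1) with (INR (S (S m))) by (rewrite (S_INR (S m)); ring).
      eapply Rle_trans; [|apply (Hmax (1 / INR (S (S m))))]. apply L2. intros i Hi.
      pose proof (covered_bound (S m) v Hcov i ltac:(lia)). specialize (Hv i ltac:(lia)).
      apply A1. lia. rewrite Nat.mod_small; lia.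
  - right; right. apply Rle_ge.
    destruct (not_all_ex_not _ _ Hncov) as [j0 Hj0]. apply imply_to_and in Hj0.
    destruct Hj0 as [Hj0 Hm0].
    apply NNPP. intro Hlt. apply Rnot_le_lt in Hlt.
    apply (count_contra (S m) v j0 Hj0 Hm0). intros j Hj Hmj.
    assert (Hne : forall i, (i < S m)%nat -> v i <> j).
    { intros i Hi He. apply Hmj. exists i. auto. }
    assert (Ha : exists i, (i < S m)%nat /\ (v i mod j = 0)%nat).
    { apply NNPP; intro H. apply (Rlt_not_le _ _ Hlt).
      eapply Rle_trans; [|apply (Hmax (1 / INR j))]. apply L2. intros i Hi. apply A1. lia.
      intro H0. apply H. exists i. split. lia. auto. }
    assert (Hb : exists i, (i < S m)%nat /\
       ~ (v i mod j = 0 \/ v i mod j + 2 <= j \/ v i + 2 * j <= 2 * S m)%nat).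
    { apply NNPP; intro H. apply (Rlt_not_le _ _ Hlt).
      eapply Rle_trans; [|apply (Hmax ((2 * INR (S m) + 1) / (2 * INR j * INR (S m))))].
      apply L2. intros i Hi. specialize (Hv i ltac:(lia)). apply B1; try lia.
      apply Hne; lia.
      apply NNPP. intro H0. apply H. exists i. split. lia. auto. }
    assert (Hc : exists i, (i < S m)%nat /\ (v i mod j = 1)%nat /\ (2 * S m < v i + 2 * j)%nat).
    { apply NNPP; intro H. apply (Rlt_not_le _ _ Hlt).
      eapply Rle_trans; [|apply (Hmax ((2 * INR (S m) - 1) / (2 * INR j * INR (S m))))].
      apply L2. intros i Hi. specialize (Hv i ltac:(lia)). apply C1; try lia.
      apply Hne; lia.
      destruct (Nat.eq_dec (v i mod j) 1) as [E|E]; [|left; auto].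
      right. destruct (Nat.le_gt_cases (v i + 2 * j) (2 * S m)) as [E2|E2]; auto.
      exfalso. apply H. exists i. split. lia. auto. }
    destruct Ha as [i1 [Hi1 Ha]]. destruct Hb as [i2 [Hi2 Hb]]. destruct Hc as [i3 [Hi3 [Hc1 Hc2]]].
    pose proof (Hv i1 Hi1). pose proof (Hv i2 Hi2). pose proof (Hv i3 Hi3).
    destruct (fail_facts (S m) j (v i1) (v i2) (v i3)) as [F1 [F2 F3]]; try lia; auto.
    split. exact F1. split. exists i1. auto. exists i3. auto.
Qed.
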